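(* For every connected undirected unweighted graph $G=(V,E)$ on $N$ vertices and every $r>1$, we have $\mathsf{FT}_{r}^{\delta=1/2}(G)\le \frac{r}{r-1}\cdot N^5$.
   Context: Mixed $\delta$-updating on a connected undirected unweighted graph $G=(V,E)$ with $N$ vertices: each vertex holds a mutant (fitness $r>0$) or wild-type (fitness $1$); $f_S(u)$ is the fitness at $u$ when $S$ is the mutant set. At each step, with probability $\delta$ a death-Birth step: choose $v$ uniformly to die, choose a neighbor $u$ of $v$ with probability proportional to $f_S(u)$, $u$ copies its type onto $v$; with probability $1-\delta$ a Birth-death step: choose $u$ with probability proportional to $f_S(u)$ among all vertices, choose a uniformly random neighbor $v$ of $u$, $u$ copies its type onto $v$. Fixation means all vertices mutant. $\mathsf{FT}_r^\delta(G,S_0)$ is the expected time (number of steps) until fixation conditioned on fixation, starting from mutant set $S_0$; $\mathsf{FT}_r^\delta(G)=\max_{S_0}\mathsf{FT}_r^\delta(G,S_0)$ over nonempty initial mutant sets $S_0\subseteq V$. *)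

(* Defs.v *)
From HB Require Import structures.
From mathcomp Require Import all_boot all_order all_algebra.
From mathcomp Require Import all_classical all_reals all_analysis.
Set Implicit Arguments. Unset Strict Implicit. Unset Printing Implicit Defensive.
Import Order.TTheory GRing.Theory Num.Theory numFieldNormedType.Exports.
Local Open Scope ring_scope.

Section MixedUpdating.
Variables (R : realType) (T : finType) (e : rel T) (r delta : R).

Definition fit (S : {set T}) (u : T) : R := if u \in S then r else 1.

Definition totfit (S : {set T}) : R := \sum_(w : T) fit S w.

Definition nbfit (S : {set T}) (v : T) : R := \sum_(w | e v w) fit S w.

Definition deg (u : T) : nat := #|[set w | e u w]|.

Definition copy (S : {set T}) (u v : T) : {set T} :=
  if u \in S then v |: S else S :\ v.

(* death-Birth step: v uniform dies, neighbour u chosen prop. to fitness *)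
Definition dB_prob (S S' : {set T}) : R :=
  \sum_(v : T) (#|T|%:R)^-1 *
    \sum_(u | e v u) (fit S u / nbfit S v) * (copy S u v == S')%:R.

(* Birth-death step: u chosen prop. to fitness, uniform neighbour v replaced *)
Definition Bd_prob (S S' : {set T}) : R :=
  \sum_(u : T) (fit S u / totfit S) *
    \sum_(v | e u v) ((deg u)%:R)^-1 * (copy S u v == S')%:R.

(* one-step transition probability of mixed delta-updating; the two
   homogeneous states set0 and setT are absorbing (this is automatic from
   the formula when the graph is connected with N >= 2; the explicit
   override only makes the degenerate case N = 1 well defined). *)
Definition trans (S S' : {set T}) : R :=
  if (S == finset.set0) || (S == [set: T]) then (S == S')%:R
  else delta * dB_prob S S' + (1 - delta) * Bd_prob S S'.

Fixpoint ntrans (n : nat) (S S' : {set T}) : R :=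
  match n with
  | 0 => (S == S')%:R
  | k.+1 => \sum_(S'' : {set T}) trans S S'' * ntrans k S'' S'
  end.

Definition fixed_by (S0 : {set T}) (n : nat) : R := ntrans n S0 [set: T].

Definition fixprob (S0 : {set T}) : R := limn (fixed_by S0).

(* E[tau * 1{fixation}] : since setT is absorbing, P(tau = k, fixation)
   = fixed_by k - fixed_by (k-1) for k >= 1 (term k = 0 vanishes). *)
Definition fixtime_mass (S0 : {set T}) : \bar R :=
  (\sum_(0 <= k <oo)
     ((k%:R * (fixed_by S0 k - fixed_by S0 k.-1))%:E))%E.

Definition FT (S0 : {set T}) : \bar R :=
  (fixtime_mass S0 * ((fixprob S0)^-1)%:E)%E.

End MixedUpdating.

(* Main.v *)
Require Import Defs.
From HB Require Import structures.
From mathcomp Require Import all_boot all_order all_algebra.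
From mathcomp Require Import all_classical all_reals all_analysis.
From mathcomp.algebra_tactics Require Import ring lra.
Import Order.TTheory GRing.Theory Num.Theory numFieldNormedType.Exports.
Local Open Scope ring_scope.
Section Proofs.
Variables (R : realType) (T : finType) (e : rel T) (r : R).
Hypothesis e_sym : symmetric e.
Hypothesis e_conn : forall x y : T, connect e x y.
Hypothesis hr : 1 < r.

Local Notation P := (trans e r (1/2)).
Local Notation N := (#|T|%:R : R).
Local Notation hS := (fun S : {set T} => (#|S|%:R : R)).

Lemma fit_ge1 (S : {set T}) (u : T) : 1 <= fit r S u.
Proof. rewrite /fit; case: ifP => _ //; exact: ltW. Qed.
Lemma fit_ler (S : {set T}) (u : T) : fit r S u <= r.
Proof. rewrite /fit; case: ifP => _ //; exact: ltW. Qed.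
Lemma fit_gt0 (S : {set T}) (u : T) : 0 < fit r S u.
Proof. exact: lt_le_trans ltr01 (fit_ge1 S u). Qed.

Lemma pickR (x : {set T} -> R) c : \sum_S' x S' * (S' == c)%:R = x c.
Proof.
rewrite (bigD1 c) //= eqxx mulr1 big1 ?addr0 // => S' hS'.
by rewrite (negbTE hS') mulr0.
Qed.

Lemma pickL (x : {set T} -> R) c : \sum_S' (c == S')%:R * x S' = x c.
Proof.
rewrite -[RHS](pickR x c); apply: eq_bigr => S' _; by rewrite mulrC eq_sym.
Qed.

Lemma pickM (a : R) (h : {set T} -> R) c :
  \sum_S' (a * (c == S')%:R) * h S' = a * h c.
Proof.
rewrite -(pickL (fun S => a * h S)); apply: eq_bigr => S' _; ring.
Qed.

Lemma nbfit_ge0 (S : {set T}) (v : T) : 0 <= nbfit e r S v.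
Proof. apply: sumr_ge0 => w _; exact: ltW (fit_gt0 _ _). Qed.
Lemma totfit_ge0 (S : {set T}) : 0 <= totfit r S.
Proof. apply: sumr_ge0 => w _; exact: ltW (fit_gt0 _ _). Qed.

Lemma dB_ge0 (S S' : {set T}) : 0 <= dB_prob e r S S'.
Proof.
rewrite /dB_prob; apply: sumr_ge0 => v _; apply: mulr_ge0; first by rewrite invr_ge0.
apply: sumr_ge0 => u _; apply: mulr_ge0 => //; apply: divr_ge0.
  exact: ltW (fit_gt0 _ _).
exact: nbfit_ge0.
Qed.

Lemma Bd_ge0 (S S' : {set T}) : 0 <= Bd_prob e r S S'.
Proof.
rewrite /Bd_prob; apply: sumr_ge0 => u _; apply: mulr_ge0.
  apply: divr_ge0; [exact: ltW (fit_gt0 _ _)| exact: totfit_ge0].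
apply: sumr_ge0 => v _; apply: mulr_ge0 => //; by rewrite invr_ge0.
Qed.

Lemma trans_ge0 (S S' : {set T}) : 0 <= P S S'.
Proof.
rewrite /trans; case: ifP => _ //.
apply: addr_ge0; apply: mulr_ge0; rewrite ?dB_ge0 ?Bd_ge0 //; lra.
Qed.

Lemma dB_exp (S : {set T}) (h : {set T} -> R) : \sum_S' dB_prob e r S S' * h S' =
  \sum_v N^-1 * \sum_(u | e v u) fit r S u / nbfit e r S v * h (copy S u v).
Proof.
rewrite /dB_prob.
under eq_bigr do rewrite big_distrl.
rewrite exchange_big; apply: eq_bigr => v _ /=.
under eq_bigr do rewrite -mulrA big_distrl /=.
rewrite -big_distrr /=; congr (_ * _).
rewrite exchange_big; apply: eq_bigr => u _ /=.
exact: pickM.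
Qed.

Lemma Bd_exp (S : {set T}) (h : {set T} -> R) : \sum_S' Bd_prob e r S S' * h S' =
  \sum_u fit r S u / totfit r S * \sum_(v | e u v) (deg e u)%:R^-1 * h (copy S u v).
Proof.
rewrite /Bd_prob.
under eq_bigr do rewrite big_distrl.
rewrite exchange_big; apply: eq_bigr => u _ /=.
under eq_bigr do rewrite -mulrA big_distrl /=.
rewrite -big_distrr /=; congr (_ * _).
rewrite exchange_big; apply: eq_bigr => v _ /=.
exact: pickM.
Qed.


Definition transient (S : {set T}) := (S != finset.set0) && (S != [set: T]).

Lemma boundary (S : {set T}) : transient S ->
  exists x y, [&& e x y, x \in S & y \notin S].
Proof.
case/andP => /set0Pn [x xS] /negP ST.
have [y yS] : exists y, y \notin S.
  apply/existsP; apply/negP => /existsP H; apply: ST; apply/eqP/setP => z.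
  rewrite inE; apply/negP => zS; apply: H; exists z; exact/negP.
suff /existsP[a /existsP[b H]] : [exists a, [exists b, [&& e a b, a \in S & b \notin S]]].
  by exists a, b.
apply/negP => H.
have cl : fingraph.closed e S.
  move=> a b eab.
  case aS: (a \in S); case bS: (b \in S) => //.
    by exfalso; apply/negP: H; apply/existsP; exists a; apply/existsP; exists b; rewrite eab aS bS.
  by exfalso; apply/negP: H; apply/existsP; exists b; apply/existsP; exists a; rewrite e_sym eab aS bS.
by move: (closed_connect cl (e_conn x y)); rewrite xS (negbTE yS).
Qed.

Lemma has_nb (x y : T) : x != y -> forall v : T, exists w, e v w.
Proof.
move=> xy v.
have [w vw] : exists w, v != w.
  case: (eqVneq v x) => [->|]; [by exists y | by exists x].
case/connectP: (e_conn v w) => [[|z p]] /=.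
  by move=> _ eq; rewrite eq eqxx in vw.
by case/andP => evz _ _; exists z.
Qed.

Lemma sum_nb_const (v : T) (c : R) : \sum_(w | e v w) c = c *+ deg e v.
Proof.
rewrite (eq_bigl (fun w => w \in [set w | e v w])); first by rewrite sumr_const.
by move=> w; rewrite inE.
Qed.

Lemma deg_gt0 (u w : T) : e u w -> (0 < deg e u)%N.
Proof. by move=> euw; apply/card_gt0P; exists w; rewrite inE. Qed.

Lemma deg_leN (u : T) : (deg e u)%:R <= N.
Proof. by rewrite ler_nat /deg max_card. Qed.

Lemma nbfit_ge_deg (S : {set T}) v : (deg e v)%:R <= nbfit e r S v.
Proof.
rewrite /nbfit -[X in X <= _]mulr1 mulr_natl -sum_nb_const.
by apply: ler_sum => w _; exact: fit_ge1.
Qed.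

Lemma nbfit_le_deg (S : {set T}) v : nbfit e r S v <= r * (deg e v)%:R.
Proof.
rewrite /nbfit mulr_natr -sum_nb_const.
by apply: ler_sum => w _; exact: fit_ler.
Qed.

Lemma totfit_geN (S : {set T}) : N <= totfit r S.
Proof.
rewrite /totfit -[X in X <= _]mulr1 mulr_natl -sumr_const.
by apply: ler_sum => w _; exact: fit_ge1.
Qed.

Lemma totfit_leN (S : {set T}) : totfit r S <= r * N.
Proof.
rewrite /totfit mulr_natr -sumr_const.
by apply: ler_sum => w _; exact: fit_ler.
Qed.

Lemma sum_w_dB (S : {set T}) v : (exists w, e v w) ->
  \sum_(u | e v u) fit r S u / nbfit e r S v = 1.
Proof.
case=> w evw; rewrite -mulr_suml divff //.
have := nbfit_ge_deg S v; have := @deg_gt0 _ _ evw; rewrite -(ltr_nat R) => h1 h2.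
rewrite /nbfit in h2 *; apply: lt0r_neq0; exact: lt_le_trans h1 h2.
Qed.

Lemma sum_w_Bd (u : T) : (exists w, e u w) ->
  \sum_(v | e u v) (deg e u)%:R^-1 = 1 :> R.
Proof.
case=> w euw; rewrite sum_nb_const -[_ *+ _]mulr_natr mulVf //.
by rewrite pnatr_eq0 -lt0n (@deg_gt0 _ _ euw).
Qed.

Lemma N_gt0 (x : T) : 0 < N.
Proof. by rewrite ltr0n; apply/card_gt0P; exists x. Qed.

Lemma sum_N (x : T) : \sum_(v : T) N^-1 = 1.
Proof. by rewrite sumr_const -[_ *+ _]mulr_natr mulVf // lt0r_neq0 // (N_gt0 x). Qed.

Lemma sum_w_tot (S : {set T}) (x : T) : \sum_u fit r S u / totfit r S = 1.
Proof.
rewrite -mulr_suml divff //; apply: lt0r_neq0.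
exact: lt_le_trans (N_gt0 x) (totfit_geN S).
Qed.

Lemma trans_abs (S S' : {set T}) : ~~ transient S -> P S S' = (S == S')%:R.
Proof. by rewrite /transient negb_and !negbK /trans => ->. Qed.

Lemma trans_tr (S : {set T}) (h : {set T} -> R) : transient S ->
  \sum_S' P S S' * h S' =
  1/2 * \sum_S' dB_prob e r S S' * h S' + (1 - 1/2) * \sum_S' Bd_prob e r S S' * h S'.
Proof.
rewrite /transient /trans => /andP[/negbTE -> /negbTE ->] /=.
rewrite !big_distrr -big_split /=; apply: eq_bigr => S' _; ring.
Qed.

Lemma tr_nb (S : {set T}) : transient S -> exists x : T, forall v, exists w, e v w.
Proof.
move=> /boundary [x [y /and3P[_ xS yS]]]; exists x; apply: (@has_nb x y).
by apply: contraNneq yS => <-.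
Qed.

Lemma sum_dB_split (S : {set T}) (x : T) c (D : T -> T -> R) :
  (forall v, exists w, e v w) ->
  \sum_v N^-1 * \sum_(u | e v u) fit r S u / nbfit e r S v * (c + D u v) =
  c + \sum_v N^-1 * \sum_(u | e v u) fit r S u / nbfit e r S v * D u v.
Proof.
move=> nb.
transitivity (\sum_(v : T) (N^-1 * c +
   N^-1 * \sum_(u | e v u) fit r S u / nbfit e r S v * D u v)).
  apply: eq_bigr => v _; rewrite -mulrDr; congr (_ * _).
  rewrite -[c in c + _](mulr1 c) -(sum_w_dB S v (nb v)) mulr_sumr -big_split /=.
  by apply: eq_bigr => u _; ring.
by rewrite big_split /= -mulr_suml (sum_N x) mul1r.
Qed.

Lemma sum_Bd_split (S : {set T}) (x : T) c (D : T -> T -> R) :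
  (forall v, exists w, e v w) ->
  \sum_u fit r S u / totfit r S * \sum_(v | e u v) (deg e u)%:R^-1 * (c + D u v) =
  c + \sum_u fit r S u / totfit r S * \sum_(v | e u v) (deg e u)%:R^-1 * D u v.
Proof.
move=> nb.
transitivity (\sum_(u : T) (fit r S u / totfit r S * c +
   fit r S u / totfit r S * \sum_(v | e u v) (deg e u)%:R^-1 * D u v)).
  apply: eq_bigr => u _; rewrite -mulrDr; congr (_ * _).
  rewrite -[c in c + _](mulr1 c) -[X in c * X](sum_w_Bd u (nb u)) mulr_sumr -big_split /=.
  by apply: eq_bigr => v _; ring.
by rewrite big_split /= -mulr_suml (sum_w_tot S x) mul1r.
Qed.

Lemma trans_sum1 (S : {set T}) : \sum_S' P S S' = 1.
Proof.
case: (boolP (transient S)) => tS.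
  have [x nb] := tr_nb S tS.
  under eq_bigr do rewrite -[P _ _]mulr1.
  rewrite trans_tr // dB_exp Bd_exp.
  have E1 : \sum_v N^-1 * \sum_(u | e v u) fit r S u / nbfit e r S v * 1 = 1.
    rewrite -[RHS](sum_N x); apply: eq_bigr => v _; rewrite -[RHS]mulr1; congr (_ * _).
    by rewrite -[RHS](sum_w_dB S v (nb v)); apply: eq_bigr => u _; rewrite mulr1.
  have E2 : \sum_u fit r S u / totfit r S * \sum_(v | e u v) (deg e u)%:R^-1 * 1 = 1.
    rewrite -[RHS](sum_w_tot S x); apply: eq_bigr => u _; rewrite -[RHS]mulr1; congr (_ * _).
    by rewrite -[RHS](sum_w_Bd u (nb u)); apply: eq_bigr => v _; rewrite mulr1.
  rewrite E1 E2; ring.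
under eq_bigr do rewrite trans_abs // -[_%:R]mulr1.
exact: (pickL (fun _ => 1)).
Qed.

Definition Delta (S : {set T}) (u v : T) : R :=
  ((u \in S) && (v \notin S))%:R - ((u \notin S) && (v \in S))%:R.

Lemma card_copy (S : {set T}) u v : hS (copy S u v) = hS S + Delta S u v.
Proof.
rewrite /copy /Delta; case uS: (u \in S) => /=.
  rewrite cardsU1 natrD; case: (v \in S) => /=; ring.
have := cardsD1 v S; case: (v \in S) => /= ->; rewrite ?natrD /=; ring.
Qed.

Definition A (S : {set T}) (u v : T) : R :=
  N^-1 * (fit r S u / nbfit e r S v) + fit r S u / totfit r S * (deg e u)%:R^-1.

Lemma dB_double (S : {set T}) (D : T -> T -> R) :
  \sum_v N^-1 * \sum_(u | e v u) fit r S u / nbfit e r S v * D u v =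
  \sum_u \sum_v (e u v)%:R * (N^-1 * (fit r S u / nbfit e r S v)) * D u v.
Proof.
rewrite [RHS]exchange_big /=; apply: eq_bigr => v _.
rewrite big_distrr big_mkcond /=; apply: eq_bigr => u _.
by rewrite e_sym; case: (e u v); rewrite /= ?mul1r ?mul0r //; ring.
Qed.

Lemma Bd_double (S : {set T}) (D : T -> T -> R) :
  \sum_u fit r S u / totfit r S * \sum_(v | e u v) (deg e u)%:R^-1 * D u v =
  \sum_u \sum_v (e u v)%:R * (fit r S u / totfit r S * (deg e u)%:R^-1) * D u v.
Proof.
apply: eq_bigr => u _.
rewrite big_distrr big_mkcond /=; apply: eq_bigr => v _.
by case: (e u v); rewrite /= ?mul1r ?mul0r //; ring.
Qed.

Lemma drift_eq (S : {set T}) : transient S ->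
  \sum_S' P S S' * hS S' =
  hS S + 1/2 * \sum_u \sum_v (e u v)%:R * A S u v * Delta S u v.
Proof.
move=> tS; have [x nb] := tr_nb S tS.
rewrite trans_tr // dB_exp Bd_exp.
under eq_bigr do under eq_bigr do rewrite card_copy.
under [X in _ + _ * X]eq_bigr do under eq_bigr do rewrite card_copy.
rewrite (sum_dB_split S x) // (sum_Bd_split S x) // dB_double Bd_double.
set s1 := (X in 1/2 * (_ + X)).
set s2 := (X in (1 - 1/2) * (_ + X)).
have -> : \sum_u \sum_v (e u v)%:R * A S u v * Delta S u v = s1 + s2.
  rewrite /s1 /s2 -big_split; apply: eq_bigr => u _ /=; rewrite -big_split; apply: eq_bigr => v _ /=.
  by rewrite /A; move: (Delta S u v) => D; ring.
clearbody s1 s2; move: (#|S|%:R) => c; lra.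
Qed.

Definition c0 : R := (r - 1) / (r * N ^+ 2).

Lemma inv_le {p q : R} : 0 < p -> p <= q -> q^-1 <= p^-1.
Proof. by move=> p0 pq; rewrite lef_pV2 ?posrE // (lt_le_trans p0 pq). Qed.

Lemma pair_bound (S : {set T}) (u v : T) : e u v -> u \in S -> v \notin S ->
  c0 <= A S u v - A S v u.
Proof.
move=> euv uS vS.
have evu : e v u by rewrite e_sym.
have r0 : 0 < r by apply: lt_trans ltr01 hr.
have r1 : 0 < r - 1 by rewrite subr_gt0.
have N0 : 0 < N by exact: (N_gt0 u).
have du1 : 1 <= (deg e u)%:R :> R by rewrite ler1n (@deg_gt0 _ _ euv).
have dv1 : 1 <= (deg e v)%:R :> R by rewrite ler1n (@deg_gt0 _ _ evu).
have nbv0 : 0 < nbfit e r S v by apply: lt_le_trans (nbfit_ge_deg S v); lra.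
have nbu0 : 0 < nbfit e r S u by apply: lt_le_trans (nbfit_ge_deg S u); lra.
have F0 : 0 < totfit r S by apply: lt_le_trans (totfit_geN S).
rewrite /A /fit uS (negbTE vS).
set a := N^-1; set b := (totfit r S)^-1; set x := (deg e u)%:R^-1;
  set y := (deg e v)%:R^-1; set p := (nbfit e r S v)^-1; set q := (nbfit e r S u)^-1.
have a0 : 0 < a by rewrite invr_gt0.
have h1 : y <= r * p.
  have := inv_le nbv0 (nbfit_le_deg S v).
  rewrite invfM => /(ler_wpM2l (ltW r0)); rewrite mulrA mulfV ?mul1r //; lra.
have h2 : q <= x by apply: inv_le; [lra | exact: nbfit_ge_deg].
have h3 : a <= x by apply: inv_le; [lra | exact: deg_leN].
have h4 : a <= y by apply: inv_le; [lra | exact: deg_leN].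
have h5 : a <= r * b.
  have := inv_le F0 (totfit_leN S).
  rewrite invfM => /(ler_wpM2l (ltW r0)); rewrite mulrA mulfV ?mul1r //; lra.
have h6 : b <= a by rewrite /a /b; exact: inv_le N0 (totfit_geN S).
have h7 : c0 <= (r - 1) * (b * a).
  rewrite /c0 invfM -exprVn -/a expr2 mulrA; apply: ler_wpM2l; first lra.
  apply: ler_wpM2r; first lra.
  have : r^-1 * (r * b) = b by rewrite mulrA mulVf ?mul1r //; lra.
  move=> <-; apply: ler_wpM2l; [by rewrite invr_ge0; lra | done].
have P1 : 0 <= (x - a) * (r * b - a) by apply: mulr_ge0; lra.
have P2 : 0 <= (y - a) * (a - b) by apply: mulr_ge0; lra.
have P3 : a * y <= a * (r * p) by apply: ler_wpM2l; lra.
have P4 : a * q <= a * x by apply: ler_wpM2l; lra.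
nra.
Qed.

Definition Z (S : {set T}) (u v : T) : R :=
  ([&& e u v, u \in S & v \notin S])%:R * (A S u v - A S v u).

Lemma swap_eq (S : {set T}) :
  \sum_u \sum_v (e u v)%:R * A S u v * Delta S u v = \sum_u \sum_v Z S u v.
Proof.
transitivity (\sum_u \sum_v ([&& e u v, u \in S & v \notin S])%:R * A S u v -
              \sum_u \sum_v ([&& e u v, u \notin S & v \in S])%:R * A S u v).
  rewrite -sumrB; apply: eq_bigr => u _; rewrite -sumrB; apply: eq_bigr => v _.
  rewrite /Delta; move: (A S u v) => a.
  by case: (e u v); case: (u \in S); case: (v \in S); rewrite /=; ring.
rewrite [X in _ - X]exchange_big /= -sumrB; apply: eq_bigr => u _.
rewrite -sumrB; apply: eq_bigr => v _; rewrite /Z mulrBr; congr (_ - _).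
by rewrite e_sym; case: (e u v); case: (u \in S); case: (v \in S).
Qed.

Lemma c0_ge0 : 0 <= c0.
Proof.
rewrite /c0; apply: divr_ge0; first by rewrite subr_ge0 ltW.
apply: mulr_ge0; [exact: ltW (lt_trans ltr01 hr) | exact: exprn_ge0].
Qed.

Lemma Z_ge0 (S : {set T}) u v : 0 <= Z S u v.
Proof.
rewrite /Z; case: (boolP [&& e u v, u \in S & v \notin S]) => [/and3P[h1 h2 h3]|] /=.
  by rewrite mul1r; apply: le_trans c0_ge0 (pair_bound S u v h1 h2 h3).
by rewrite mul0r.
Qed.

Lemma sum_ge_term (F : T -> R) x : (forall y, 0 <= F y) -> F x <= \sum_y F y.
Proof.
by move=> F0; rewrite (bigD1 x) //= lerDl; apply: sumr_ge0 => y _.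
Qed.

Definition tr (S : {set T}) : R := (transient S)%:R.

Lemma drift (S : {set T}) : hS S + c0 / 2 * tr S <= \sum_S' P S S' * hS S'.
Proof.
case: (boolP (transient S)) => tS.
  rewrite drift_eq // swap_eq /tr tS mulr1 lerD2l.
  have [x [y /and3P[h1 h2 h3]]] := boundary S tS.
  have := pair_bound S x y h1 h2 h3.
  have : Z S x y <= \sum_u \sum_v Z S u v.
    apply: (@le_trans _ _ (\sum_v Z S x v)).
      by apply: sum_ge_term => v; exact: Z_ge0.
    apply: (sum_ge_term (fun u => \sum_v Z S u v)) => u.
    by apply: sumr_ge0 => v _; exact: Z_ge0.
  rewrite /Z h1 h2 h3 /= mul1r.
  move: (\sum_u _) => s; lra.
rewrite /tr (negbTE tS) /= mulr0 addr0.
under eq_bigr do rewrite trans_abs //.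
by rewrite pickL.
Qed.

Local Notation nt := (ntrans e r (1/2)).
Definition Fk k (h : {set T} -> R) (S : {set T}) := \sum_S' nt k S S' * h S'.

Lemma Fk0 h S : Fk 0 h S = h S.
Proof. exact: pickL. Qed.

Lemma FkS k h S : Fk k.+1 h S = \sum_S'' P S S'' * Fk k h S''.
Proof.
rewrite /Fk /=; under eq_bigr do rewrite big_distrl.
rewrite exchange_big; apply: eq_bigr => S'' _ /=; rewrite big_distrr.
by apply: eq_bigr => S' _ /=; rewrite mulrA.
Qed.

Lemma nt_ge0 k (S S' : {set T}) : 0 <= nt k S S'.
Proof.
elim: k S => [|k IH] S /=; first exact: ler0n.
by apply: sumr_ge0 => S'' _; apply: mulr_ge0; [exact: trans_ge0 | exact: IH].
Qed.

Lemma Fk_one k S : Fk k (fun _ => 1) S = 1.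
Proof.
elim: k S => [|k IH] S; first by rewrite Fk0.
rewrite FkS; under eq_bigr do rewrite IH mulr1; exact: trans_sum1.
Qed.

Lemma Fk_le k (h1 h2 : {set T} -> R) S : (forall S', h1 S' <= h2 S') ->
  Fk k h1 S <= Fk k h2 S.
Proof.
by move=> h; apply: ler_sum => S' _; apply: ler_wpM2l; [exact: nt_ge0 | exact: h].
Qed.

Lemma Fk_ge0 k h S : (forall S', 0 <= h S') -> 0 <= Fk k h S.
Proof.
by move=> h0; apply: sumr_ge0 => S' _; apply: mulr_ge0; [exact: nt_ge0 | exact: h0].
Qed.

Lemma nt_Fk k S c : nt k S c = Fk k (fun S' => (S' == c)%:R) S.
Proof. by rewrite /Fk pickR. Qed.

Lemma abs_mono1 (c : {set T}) : ~~ transient c -> forall k S, nt k S c <= nt k.+1 S c.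
Proof.
move=> ac k S; rewrite !nt_Fk; elim: k S => [|k IH] S.
  rewrite FkS Fk0; under eq_bigr do rewrite Fk0.
  rewrite pickR; case: (eqVneq S c) => [->|_] /=.
    by rewrite trans_abs // eqxx.
  exact: trans_ge0.
rewrite (FkS k.+1) FkS; apply: ler_sum => S'' _; apply: ler_wpM2l; [exact: trans_ge0 | exact: IH].
Qed.

Lemma abs_mono (c : {set T}) : ~~ transient c -> forall S k m, (k <= m)%N ->
  nt k S c <= nt m S c.
Proof.
move=> ac S k m /subnKC <-; elim: (m - k)%N => [|n IH]; first by rewrite addn0.
by rewrite addnS; apply: le_trans IH (abs_mono1 c ac _ _).
Qed.

Definition g k (S : {set T}) := \sum_(0 <= j < k) Fk j tr S.

Lemma gS k S : g k.+1 S = tr S + \sum_S'' P S S'' * g k S''.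
Proof.
rewrite /g big_nat_recl // Fk0; congr (_ + _).
under eq_bigr do rewrite FkS.
rewrite exchange_big /=; apply: eq_bigr => S'' _; by rewrite big_distrr.
Qed.

Lemma drift_k k S : hS S + c0 / 2 * g k S <= Fk k hS S.
Proof.
elim: k S => [|k IH] S.
  by rewrite /g big_geq // mulr0 addr0 Fk0.
rewrite FkS gS.
apply: le_trans (_ : \sum_S'' P S S'' * (hS S'' + c0 / 2 * g k S'') <= _); last first.
  by apply: ler_sum => S'' _; apply: ler_wpM2l; [exact: trans_ge0 | exact: IH].
have -> : \sum_S'' P S S'' * (hS S'' + c0 / 2 * g k S'') =
  \sum_S'' P S S'' * hS S'' + c0 / 2 * \sum_S'' P S S'' * g k S''.
  rewrite big_distrr -big_split; apply: eq_bigr => S'' _ /=; ring.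
have := drift S; move: (\sum_S'' _) (\sum_S'' _) => s1 s2.
rewrite mulrDr; lra.
Qed.

Lemma Fk_leN k S : Fk k hS S <= N.
Proof.
apply: le_trans (_ : Fk k (fun _ => N) S <= _).
  by apply: Fk_le => S'; rewrite ler_nat max_card.
rewrite /Fk -mulr_suml.
have := Fk_one k S; rewrite /Fk; under eq_bigr do rewrite mulr1; move=> ->.
by rewrite mul1r.
Qed.

Lemma decomp k S : finset.set0 != [set: T] ->
  nt k S [set: T] + nt k S finset.set0 + Fk k tr S = 1.
Proof.
move=> ne; rewrite !nt_Fk -[RHS](Fk_one k S) /Fk -!big_split /=; apply: eq_bigr => S' _.
rewrite -!mulrDr; congr (_ * _).
rewrite /tr /transient; case: (eqVneq S' [set: T]) => [->|h1].
  by rewrite eq_sym (negbTE ne) /=; ring.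
by case: (S' == finset.set0); rewrite /=; ring.
Qed.

Lemma main_bound (S0 : {set T}) : S0 != finset.set0 ->
  (FT e r (1 / 2) S0 <= ((r / (r - 1)) * N ^+ 5)%:E)%E.
Proof.
move=> hS0; have [x0 x0S] := set0Pn _ hS0.
have N0 : 0 < N := N_gt0 x0.
have N1 : 1 <= N by rewrite ler1n; apply/card_gt0P; exists x0.
have r0 : 0 < r by apply: lt_trans ltr01 hr.
have r1 : 0 < r - 1 by rewrite subr_gt0.
have ne : finset.set0 != [set: T].
  by apply/eqP => /setP /(_ x0); rewrite !inE.
have absT : ~~ transient [set: T] by rewrite /transient eqxx andbF.
have abs0 : ~~ transient finset.set0 by rewrite /transient eqxx.
set a := fun k => nt k S0 [set: T].
set b := fun k => nt k S0 finset.set0.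
set q := fun k => Fk k tr S0.
have dec k : a k + b k + q k = 1 by exact: decomp.
have q0 k : 0 <= q k by apply: Fk_ge0 => S'; rewrite /tr ler0n.
have b0 k : 0 <= b k by exact: nt_ge0.
have amono k m : (k <= m)%N -> a k <= a m by exact: abs_mono.
have bmono k m : (k <= m)%N -> b k <= b m by exact: abs_mono.
have c0p : 0 < c0.
  rewrite /c0; apply: divr_gt0 => //; apply: mulr_gt0 => //; exact: exprn_gt0.
set d := c0 / 2.
have d0 : 0 < d by rewrite /d; lra.
set B := (N - 1) / d.
have hS01 : 1 <= hS S0 by rewrite ler1n card_gt0.
have gB k : g k S0 <= B.
  rewrite /B ler_pdivlMr // mulrC.
  have := drift_k k S0; have := Fk_leN k S0; rewrite -/d; lra.
have gap k n : (k <= n)%N -> a n - a k <= q k.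
  move=> kn; have := dec n; have := dec k; have := q0 n; have := bmono _ _ kn; lra.
have psum n : \sum_(0 <= k < n.+1) k%:R * (a k - a k.-1) =
              \sum_(0 <= k < n) (a n - a k).
  elim: n => [|n IH]; first by rewrite big_nat1 mul0r big_geq.
  rewrite big_nat_recr //= IH big_nat_recr //=.
  have -> : \sum_(0 <= k < n) (a n.+1 - a k) =
            \sum_(0 <= k < n) (a n - a k) + \sum_(0 <= k < n) (a n.+1 - a n).
    by rewrite -big_split; apply: eq_bigr => k _ /=; ring.
  rewrite sumr_const_nat subn0 -mulr_natl -natr1.
  move: (\sum_(0 <= k < n) _) => s; ring.
have pB n : \sum_(0 <= k < n) k%:R * (a k - a k.-1) <= B.
  case: n => [|n]; first by rewrite big_geq // /B; apply: divr_ge0; lra.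
  rewrite psum; apply: le_trans (gB n); rewrite /g; apply: ler_sum_nat => k /andP[_ kn].
  exact: gap (ltnW kn).
have term0 k : 0 <= k%:R * (a k - a k.-1).
  apply: mulr_ge0; first exact: ler0n.
  by rewrite subr_ge0; apply: amono; exact: leq_pred.
have massB : (fixtime_mass e r (1/2) S0 <= B%:E)%E.
  rewrite /fixtime_mass; apply: lime_le.
    by apply: is_cvg_nneseries => k _ _; rewrite lee_fin; exact: term0.
  by apply: nearW => n; rewrite sumEFin lee_fin; exact: pB.
set p := fixprob e r (1/2) S0.
have ahomo : {homo a : n m / (n <= m)%N >-> n <= m} by move=> n m; exact: amono.
have a1 k : a k <= 1 by have := dec k; have := b0 k; have := q0 k; lra.
have acvg : cvgn a.
  apply: nondecreasing_is_cvgn => //; exists 1 => _ [k _ <-]; exact: a1.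
have ale k : a k <= p by exact: nondecreasing_cvgn_le ahomo acvg k.
have low n : N^-1 <= a n + q n.
  have F1 : 1 <= Fk n hS S0.
    have := drift_k n S0; have : 0 <= g n S0 by apply: sumr_ge0 => k _; exact: q0.
    move=> g0; have : 0 <= c0 / 2 * g n S0 by apply: mulr_ge0 => //; lra.
    lra.
  have F2 : Fk n hS S0 <= N * a n + N * q n.
    apply: le_trans (Fk_le n hS (fun S' => N * (S' == [set: T])%:R + N * tr S') S0 _) _.
      move=> S'; case: (eqVneq S' [set: T]) => [->|h].
        by rewrite /tr (negbTE absT) cardsT mulr1 mulr0 addr0.
      rewrite /tr mulr0 add0r; case: (boolP (transient S')) => tS.
        by rewrite mulr1 ler_nat max_card.
      move: tS; rewrite /transient negb_and !negbK (negbTE h) orbF => /eqP ->.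
      by rewrite cards0 mulr0.
    rewrite le_eqVlt; apply/orP; left; apply/eqP; rewrite /Fk.
    under eq_bigr do rewrite mulrDr.
    rewrite big_split /= /a /q /Fk -(pickR (nt n S0) [set: T]) !big_distrr /=.
    by congr (_ + _); apply: eq_bigr => S' _; ring.
  rewrite -div1r ler_pdivrMr //; lra.
have qmono k n : (k <= n)%N -> q n <= q k.
  move=> kn; have := dec n; have := dec k; have := amono _ _ kn; have := bmono _ _ kn; lra.
have qn n : q n * n.+1%:R <= B.
  apply: le_trans (gB n.+1); rewrite /g.
  apply: le_trans (_ : \sum_(0 <= k < n.+1) q n <= _).
    by rewrite sumr_const_nat subn0 mulr_natr.
  by apply: ler_sum_nat => k /andP[_ kn]; apply: qmono.
have plow n : N^-1 <= p + B / n.+1%:R.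
  have : q n <= B / n.+1%:R by rewrite ler_pdivlMr ?ltr0Sn.
  have := low n; have := ale n; move: (B / _) (a n) (q n) => t x y; lra.
have pN : N^-1 <= p.
  rewrite leNgt; apply/negP => hp.
  set eps := N^-1 - p.
  have eps0 : 0 < eps by rewrite /eps subr_gt0.
  set n := Num.Def.trunc (B / eps).
  have h1 := truncnS_gt (B / eps); rewrite -/n in h1.
  have h2 : B / n.+1%:R < eps.
    by rewrite ltr_pdivrMr ?ltr0Sn // mulrC -ltr_pdivrMr.
  move: h2 (plow n); rewrite /eps; move: (B / n.+1%:R) => t; lra.
have p0 : 0 < p by apply: lt_le_trans pN; rewrite invr_gt0.
rewrite /FT -/p.
apply: (le_trans (lee_wpmul2r _ massB)); first by rewrite lee_fin invr_ge0 ltW.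
rewrite -EFinM lee_fin.
have pinv : p^-1 <= N.
  by have := inv_le (p := N^-1) (q := p); rewrite invrK; apply; rewrite ?invr_gt0.
have B0 : 0 <= B by rewrite /B; apply: divr_ge0; lra.
apply: le_trans (ler_wpM2l B0 pinv) _.
have -> : B * N = 2 * r * N^+3 * (N - 1) / (r - 1).
  rewrite /B /d /c0; field.
  by rewrite !lt0r_neq0.
rewrite [X in _ <= X]mulrAC; apply: ler_wpM2r; first by rewrite invr_ge0 ltW.
rewrite -subr_ge0.
have -> : r * N ^+ 5 - 2 * r * N ^+ 3 * (N - 1) = r * N ^+ 3 * ((N - 1) ^+ 2 + 1) by ring.
apply: mulr_ge0; first by apply: mulr_ge0; [exact: ltW | exact: exprn_ge0 (ltW N0)].
by apply: addr_ge0; [exact: sqr_ge0 | exact: ler01].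
Qed.

End Proofs.

Theorem mainTheorem3 (R : realType) (T : finType) (e : rel T)
  (e_sym : symmetric e) (e_irr : irreflexive e)
  (e_conn : forall x y : T, connect e x y)
  (r : R) (hr : 1 < r) (S0 : {set T}) (hS0 : S0 != finset.set0) :
  (FT e r (1 / 2) S0 <= ((r / (r - 1)) * (#|T|%:R) ^+ 5)%:E)%E.
Proof. exact: main_bound. Qed.
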